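(* Let $p,q,e$ be positive integers. If $n>1$ is the length of a cycle of the Cat map over $\mathbb{Z}_{2^e}$, then $H_n$ is even.
   Context: $\mathbf{C}=\begin{bmatrix}1 & p\\ q & 1+pq\end{bmatrix}$; the Cat map over $\mathbb{Z}_{2^e}$ is the bijection $v\mapsto\mathbf{C}v\bmod 2^e$ of $\mathbb{Z}_{2^e}^2$, and a cycle of length $n$ is the orbit of a point $v$ for which $n$ is the least positive integer with $\mathbf{C}^nv\equiv v\pmod{2^e}$. $A=pq+2$, $B=\sqrt{A^2-4}$, $H_n=\frac{1}{B}\left(\left(\frac{A+B}{2}\right)^n-\left(\frac{A-B}{2}\right)^n\right)$ (an integer). *)

(* Defs.v *)
From mathcomp Require Import all_boot all_order all_algebra all_field.
Set Implicit Arguments. Unset Strict Implicit. Unset Printing Implicit Defensive.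
Import GRing.Theory Num.Theory.
Local Open Scope ring_scope.

Definition catmx (p q e : nat) : 'M['Z_(2 ^ e)]_2 :=
  \matrix_(i < 2, j < 2)
    if i == 0 :> 'I_2 then (if j == 0 :> 'I_2 then 1 else p%:R)
    else (if j == 0 :> 'I_2 then q%:R else 1 + (p * q)%:R).

Definition is_cycle_length (p q e n : nat) : Prop :=
  exists v : 'cV['Z_(2 ^ e)]_2,
    (0 < n)%N /\ (catmx p q e) ^+ n *m v = v /\
    forall m : nat, (0 < m < n)%N -> (catmx p q e) ^+ m *m v != v.

Definition catA (p q : nat) : algC := (p * q + 2)%:R.
Definition catB (p q : nat) : algC := sqrtC (catA p q ^+ 2 - 4).
Definition catH (p q n : nat) : algC :=
  (((catA p q + catB p q) / 2) ^+ n - ((catA p q - catB p q) / 2) ^+ n) / catB p q.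

(* Main.v *)
Require Import Defs.
From mathcomp Require Import all_boot all_order all_algebra all_field.
From mathcomp Require Import ring lra zify.
Set Implicit Arguments. Unset Strict Implicit. Unset Printing Implicit Defensive.
Import GRing.Theory Num.Theory.
Local Open Scope ring_scope.

Lemma catCH p q e : let C := catmx p q e in C * C = C *+ (p * q + 2) - 1.
Proof.
move=> C; apply/matrixP => i j; rewrite -mulmxE -scaler_nat !mxE !big_ord_recl big_ord0 /C !mxE.
case: i => [[|[|//]] Hi]; case: j => [[|[|//]] Hj] /=; rewrite ?natrD ?natrM; ring.
Qed.

Lemma kill e (X : 'M['Z_(2^e)]_2) (v : 'cV['Z_(2^e)]_2) :
  (0 < e)%N -> v = (X *+ 2) *m v -> v = 0.
Proof.
move=> e0 hv.
have hk : forall k, v = (X ^+ k *+ 2 ^ k) *m v.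
  elim=> [|k IH]; first by rewrite expr0 mulr1n mul1mx.
  rewrite {1}hv {1}IH mulmxA mulmxE mulrnAl mulrnAr -mulrnA exprS expnS.
  by rewrite mulnC.
rewrite (hk e) -scaler_nat pchar_Zp ?scale0r ?mul0mx //.
by rewrite -(expn0 2) ltn_exp2l.
Qed.

Lemma odd_mul (R : pzRingType) (Z W : R) :
  (1 + Z *+ 2) * (1 + W *+ 2) = 1 + (Z + W + (Z * W) *+ 2) *+ 2.
Proof.
rewrite mulrDl mul1r mulrDr mulr1 mulrnAl mulrnAr -mulrnA.
rewrite (mulrnDl 2 (Z + W)) (mulrnDl 2 Z) -mulrnA.
rewrite -!addrA; congr (_ + _).
rewrite (addrCA W Z) (addrCA W Z); congr (_ + _).
by rewrite (addrCA W Z) (addrCA W Z).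

Qed.

Lemma odd_exp (R : pzRingType) (Z : R) k : exists Z', (1 + Z *+ 2) ^+ k = 1 + Z' *+ 2.
Proof.
elim: k => [|k [Z' IH]]; first by exists 0; rewrite expr0 mul0rn addr0.
by rewrite exprS IH odd_mul; eexists.
Qed.

Lemma pow2 (R : pzRingType) (Z : R) k : exists Z', (1 + Z *+ 2) ^+ (2 ^ k) = 1 + Z' *+ (2 ^ k.+1).
Proof.
elim: k => [|k [Z' IH]]; first by exists Z; rewrite expr1.
exists (Z' + (Z' * Z') *+ 2 ^ k).
rewrite expnS mulnC exprM IH expr2 mulrDl mul1r mulrDr mulr1 mulrnAl mulrnAr -mulrnA.
rewrite (mulrnDl _ Z') -mulrnA -!addrA; congr (_ + _).
rewrite addrA -mulrnDr; congr (_ *+ _ + _ *+ _); rewrite !expnS; lia.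
Qed.

Section Ev.
Variables p q e : nat.
Local Notation C := (catmx p q e).
Local Notation E := (horner_mx C : {rmorphism _ -> _}).
Definition fpol : {poly 'Z_(2^e)} := 'X^2 - 'X *+ (p * q + 2) + 1.

Lemma EX : E (polyX _) = C.
Proof. exact: (horner_mx_X C). Qed.

Lemma Ef0 : E fpol = 0.
Proof.
rewrite /fpol rmorphD rmorphB rmorph1 rmorphMn rmorphXn.
rewrite EX.
by rewrite expr2 catCH addrAC subrK subrr.
Qed.

Lemma Emod P Q K : P = Q + K * fpol -> E P = E Q.
Proof. by move=> ->; rewrite rmorphD rmorphM Ef0 mulr0 addr0. Qed.
End Ev.
Lemma g_even (R : comNzRingType) (X : R) r : X ^+ 2 = 1 + (X *+ (r + 1) - 1) *+ 2 + 1 * (X ^+ 2 - X *+ (r * 2 + 2) + 1).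
Proof. ring. Qed.
Lemma g_cube (R : comNzRingType) (X : R) s : X ^+ 3 = 1 + (X *+ (2 * (s + 1) * (s + 2)) - (s + 2)%:R) *+ 2
   + (X + (2 * s + 3)%:R) * (X ^+ 2 - X *+ (2 * s + 1 + 2) + 1).
Proof. ring. Qed.
Lemma g_r1 (R : comNzRingType) (X : R) s : - X * (X - 1) = 1 + (- (X *+ (s + 1))) *+ 2
   + (-1) * (X ^+ 2 - X *+ (2 * s + 1 + 2) + 1).
Proof. ring. Qed.
Lemma g_r2 (R : comNzRingType) (X : R) s : ((2 * s + 3)%:R - X) * (X ^+ 2 - 1) = 1 + (X - (s + 2)%:R) *+ 2
   + (- X) * (X ^+ 2 - X *+ (2 * s + 1 + 2) + 1).
Proof. ring. Qed.

Lemma mulmxnl e (X : 'M['Z_(2^e)]_2) (v : 'cV['Z_(2^e)]_2) k : (X *+ k) *m v = (X *m v) *+ k.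
Proof. by elim: k => [|k IH]; rewrite ?mulr0n ?mul0mx // !mulrS mulmxDl IH. Qed.

Section Main.
Variables p q e : nat.
Local Notation C := (catmx p q e).
Local Notation E := (horner_mx C : {rmorphism _ -> _}).

Lemma fixmul n (v : 'cV['Z_(2^e)]_2) : C ^+ n *m v = v -> forall d, C ^+ (d * n) *m v = v.
Proof.
move=> h; elim=> [|d IH]; first by rewrite mul0n expr0 mul1mx.
by rewrite mulSn exprD -mulmxE -mulmxA IH h.
Qed.

Lemma even_sq : ~~ odd (p * q) -> exists Y, C ^+ 2 = 1 + Y *+ 2.
Proof.
move=> ev; set r := (p * q)./2.
have hr : (p * q = r * 2)%N by rewrite -{1}(odd_double_half (p * q)) (negbTE ev) -muln2.
exists (E ('X *+ (r + 1) - 1)).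
have := @Emod p q e ('X^2) (1 + ('X *+ (r + 1) - 1) *+ 2) 1.
rewrite /fpol hr rmorphXn EX rmorphD rmorphMn rmorph1 => -> //.
exact: g_even.
Qed.

Lemma even_pow (e0 : (0 < e)%N) : ~~ odd (p * q) -> C ^+ (2 ^ e) = 1.
Proof.
move=> ev; have [Y hY] := even_sq ev.
have [Z hZ] := pow2 Y e.-1.
have h2 : (2 ^ e = 2 * 2 ^ e.-1)%N by rewrite -expnS prednK.
rewrite [X in C ^+ X]h2 exprM hY hZ prednK //.
by rewrite -scaler_nat pchar_Zp ?scale0r ?addr0 // -(expn0 2) ltn_exp2l.
Qed.

Lemma even_case n (v : 'cV['Z_(2^e)]_2) : (0 < e)%N -> ~~ odd (p * q) -> odd n -> (1 < n)%N ->
  C ^+ n *m v = v -> exists m, (0 < m < n)%N /\ C ^+ m *m v = v.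
Proof.
move=> e0 ev on n1 hn.
exists (2 ^ e %% n)%N; split.
  rewrite ltn_mod (ltn_trans _ n1) // andbT lt0n; apply/negP => hd0.
  have hd : (n %| 2 ^ e)%N by rewrite /dvdn.
  suff : coprime n (2 ^ e) by rewrite /coprime (gcdn_idPl hd) => /eqP n1'; rewrite n1' in n1.
  by apply: coprimeXr; rewrite coprimen2.
have := even_pow e0 ev; rewrite [X in C ^+ X](divn_eq (2 ^ e) n) addnC exprD => h.
by rewrite -{1}(fixmul hn (2 ^ e %/ n)%N) mulmxA mulmxE h mul1mx.
Qed.

Lemma kill2 (A P Z W : 'M['Z_(2^e)]_2) (v : 'cV['Z_(2^e)]_2) : (0 < e)%N ->
  (A * (1 + Z *+ 2)) *m v = v -> P * (A - 1) = 1 + W *+ 2 -> v = 0.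
Proof.
move=> e0 h1 h2; apply: (kill (X := - (P * A * Z) - W)) => //.
have h3 : (A - 1) *m v = - (((A * Z) *+ 2) *m v).
  move: h1; rewrite mulrDr mulr1 mulmxDl mulrnAr => h1.
  by rewrite mulmxBl mul1mx -{2}h1 opprD addrA subrr add0r.
have h4 : (P * (A - 1)) *m v = v + (W *+ 2) *m v by rewrite h2 mulmxDl mul1mx.
have h5 : ((P * A * Z) *+ 2) *m v = - (v + (W *+ 2) *m v).
  by rewrite -mulrA -mulrnAr -mulmxE -mulmxA -(opprK ((A * Z) *+ 2 *m v)) -h3 mulmxN mulmxA mulmxE h4.
by rewrite mulrnBl mulNrn mulmxBl mulNmx h5 opprK addrK.
Qed.

Lemma odd_half : odd (p * q) -> (p * q = 2 * (p * q)./2 + 1)%N.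
Proof. by move=> od; rewrite -{1}(odd_double_half (p * q)) od mul2n addnC. Qed.

Lemma odd_cube : odd (p * q) -> exists Y, C ^+ 3 = 1 + Y *+ 2.
Proof.
move=> od; set s := (p * q)./2; have hs := odd_half od.
pose Yp : {poly 'Z_(2^e)} := 'X *+ (2 * (s + 1) * (s + 2)) - (s + 2)%:R.
have h : E ('X ^+ 3) = E (1 + Yp *+ 2).
  apply: (@Emod p q e _ _ ('X + (2 * s + 3)%:R)); rewrite /fpol hs /Yp; exact: g_cube.
exists (E Yp); move: h; rewrite rmorphXn EX => ->.
by rewrite rmorphD rmorph1 rmorphMn.
Qed.

Lemma odd_r1 : odd (p * q) -> exists P W, P * (C ^+ 1 - 1) = 1 + W *+ 2.
Proof.
move=> od; set s := (p * q)./2; have hs := odd_half od.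
pose Yp : {poly 'Z_(2^e)} := - ('X *+ (s + 1)).
have h : E (- 'X * ('X - 1)) = E (1 + Yp *+ 2).
  apply: (@Emod p q e _ _ (-1)); rewrite /fpol hs /Yp; exact: g_r1.
exists (- C), (E Yp); move: h; rewrite rmorphM rmorphN rmorphB rmorph1 EX expr1 => ->.
by rewrite rmorphD rmorph1 rmorphMn.
Qed.

Lemma odd_r2 : odd (p * q) -> exists P W, P * (C ^+ 2 - 1) = 1 + W *+ 2.
Proof.
move=> od; set s := (p * q)./2; have hs := odd_half od.
pose Yp : {poly 'Z_(2^e)} := 'X - (s + 2)%:R.
pose c : nat := (2 * s + 3)%N.
have h : E ((c%:R - 'X) * ('X ^+ 2 - 1)) = E (1 + Yp *+ 2).
  apply: (@Emod p q e _ _ (- 'X)); rewrite /fpol hs /Yp /c; exact: g_r2.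
exists (c%:R - C), (E Yp); move: h; rewrite rmorphM rmorphB rmorph_nat rmorphB rmorph1 rmorphXn EX => ->.
by rewrite rmorphD rmorph1 rmorphMn.
Qed.

Lemma odd_case n (v : 'cV['Z_(2^e)]_2) : (0 < e)%N -> odd (p * q) -> (n %% 3 != 0)%N ->
  C ^+ n *m v = v -> v = 0.
Proof.
move=> e0 od n3 hn.
have [Y hY] := odd_cube od.
have [Z hZ] := odd_exp Y (n %/ 3).
move: hn; rewrite (divn_eq n 3) addnC exprD mulnC exprM hY hZ => hn.
have : (n %% 3 = 1 \/ n %% 3 = 2)%N by have := ltn_mod n 3; lia.
case=> hr; rewrite hr in hn.
  by have [P [W h]] := odd_r1 od; exact: kill2 e0 hn h.
by have [P [W h]] := odd_r2 od; exact: kill2 e0 hn h.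
Qed.
End Main.

Fixpoint hseq (a : int) (n : nat) : int :=
  if n is m.+1 then (if m is k.+1 then a * hseq a m - hseq a k else 1) else 0.

Lemma hseqS a n : hseq a n.+2 = a * hseq a n.+1 - hseq a n.
Proof. by []. Qed.

Lemma rec_gen (F : fieldType) (al be B : F) n : al * be = 1 ->
  (al ^+ n.+2 - be ^+ n.+2) / B = (al + be) * ((al ^+ n.+1 - be ^+ n.+1) / B) - (al ^+ n - be ^+ n) / B.
Proof.
move=> h.
have key : al ^+ n.+2 - be ^+ n.+2 = (al + be) * (al ^+ n.+1 - be ^+ n.+1) - al * be * (al ^+ n - be ^+ n).
  rewrite !exprS; ring.
by rewrite key h mul1r mulrBl mulrA.
Qed.

Lemma catH_rec p q n : (0 < (p * q)%N)%N ->
  catH p q n.+2 = Defs.catA p q * catH p q n.+1 - catH p q n.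
Proof.
move=> pq0.
set A := Defs.catA p q; set B := catB p q.
have hB2 : B ^+ 2 = A ^+ 2 - 4 by rewrite /B sqrtCK.
have h2 : (2 : algC) != 0 by rewrite pnatr_eq0.
set al := (A + B) / 2; set be := (A - B) / 2.
have hs : A = al + be by rewrite /al /be; field.
have hp : al * be = 1.
  rewrite /al /be.
  have -> : (A + B) / 2 * ((A - B) / 2) = (A ^+ 2 - B ^+ 2) / 4 by field.
  by rewrite hB2 opprB addrC subrK divff // pnatr_eq0.
rewrite /catH -/A -/B -/al -/be hs.
exact: rec_gen.
Qed.

Lemma catH_h p q n : (0 < (p * q)%N)%N -> catH p q n = (hseq (p * q + 2)%:Z n)%:~R.
Proof.
move=> pq0.
have hB : catB p q != 0.
  apply/eqP => hB.
  have : catB p q ^+ 2 = 0 by rewrite hB expr0n.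
  rewrite /catB sqrtCK /catA => /eqP; rewrite subr_eq0 -natrX.
  rewrite eqr_nat => /eqP; nia.
suff : catH p q n = (hseq (p * q + 2)%:Z n)%:~R /\ catH p q n.+1 = (hseq (p * q + 2)%:Z n.+1)%:~R by case.
elim: n => [|n [IH1 IH2]].
  split; rewrite /catH ?expr0 ?subrr ?mul0r //= expr1 expr1.
  rewrite (_ : (Defs.catA p q + catB p q) / 2 - (Defs.catA p q - catB p q) / 2 = catB p q); last first.
  by field.
  by rewrite divff.
split => //.
by rewrite catH_rec // hseqS rmorphB rmorphM /= IH1 IH2.
Qed.

Lemma par_even (a b : int) : a = 2 * b -> forall k,
  (exists j, hseq a (k.*2) = 2 * j) /\ (exists j, hseq a (k.*2).+1 = 2 * j + 1).
Proof.
move=> ha; elim=> [|k [[j1 h1] [j2 h2]]]; first by split; [exists 0 | exists 0].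
rewrite doubleS.
have e2 : hseq a (k.*2).+2 = 2 * (b * (2 * j2 + 1) - j1) by rewrite hseqS h1 h2 ha; ring.
split; first by exists (b * (2 * j2 + 1) - j1).
exists (2 * b * (b * (2 * j2 + 1) - j1) - j2 - 1).
by rewrite hseqS e2 h2 ha; ring.
Qed.

Lemma par_odd (a b : int) : a = 2 * b + 1 -> forall k,
  (exists j, hseq a (k * 3) = 2 * j) /\ (exists j, hseq a (k * 3).+1 = 2 * j + 1).
Proof.
move=> ha; elim=> [|k [[j1 h1] [j2 h2]]]; first by split; [exists 0 | exists 0].
have -> : (k.+1 * 3 = (k * 3).+3)%N by lia.
set X := 2 * b * j2 + b + j2 - j1.
have e2 : hseq a (k * 3).+2 = 2 * X + 1 by rewrite hseqS h1 h2 ha /X; ring.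
set J := 2 * b * X + b + X - j2.
have e3 : hseq a (k * 3).+3 = 2 * J by rewrite hseqS e2 h2 ha /J; ring.
split; first by exists J.
exists (2 * b * J + J - X - 1).
by rewrite hseqS e3 e2 ha; ring.
Qed.

Theorem proposition5 (p q e n : nat) :
  (0 < p)%N -> (0 < q)%N -> (0 < e)%N -> (1 < n)%N ->
  is_cycle_length p q e n ->
  exists k : int, catH p q n = (2 * k)%:~R.
Proof.
move=> p0 q0 e0 n1 [v [n0 [hn hmin]]].
have pq0 : (0 < (p * q)%N)%N by rewrite muln_gt0 p0 q0.
rewrite catH_h //.
suff [j hj] : exists j, hseq (p * q + 2)%:Z n = 2 * j by exists j; rewrite hj.
case od: (odd (p * q)).
  have hs := odd_half od.
  have hb : (p * q + 2)%:Z = 2 * ((p * q)./2 + 1)%:Z + 1.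
    by rewrite {1}hs; lia.
  case n3: (n %% 3 == 0)%N.
    have hn3 : n = (n %/ 3 * 3)%N by rewrite {1}(divn_eq n 3) (eqP n3) addn0.
    by rewrite hn3; exact: (proj1 (par_odd hb _)).
  have v0 := odd_case e0 od (negbT n3) hn.
  have := hmin 1%N; rewrite n1 v0 mulmx0 eqxx => /(_ isT) //.
have hb : (p * q + 2)%:Z = 2 * ((p * q)./2 + 1)%:Z.
  have := odd_double_half (p * q); rewrite od add0n => h.
  by rewrite -{1}h; lia.
case on: (odd n).
  have [m [hm hm']] := even_case e0 (negbT od) on n1 hn.
  by move: (hmin m hm); rewrite hm' eqxx.
have := odd_double_half n; rewrite on add0n => <-.
exact: (proj1 (par_even hb _)).
Qed.
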